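(* Let $X,Y$ be real Banach spaces, $C\subseteq X$ a nonempty closed set, $f:X\to\mathbb{R}\cup\{+\infty\}$ and $g:X\to Y$. Let $x_0$ be a local solution of the problem $\min\{f(x)\,;\ g(x)=0,\ x\in C\}$. Assume: (H_f) $f$ is Gâteaux differentiable at $x_0$ and there exist $r>0$ and $K_f>0$ such that $f(x)-f(x')\le K_f\|x-x'\|_X$ for all $x,x'\in B_X(x_0,r)$; (H_g) $g$ is Gâteaux differentiable at $x_0$; and that the system ''$x\in C$, $g(x)=0$'' is calm at $x_0$, i.e. there exist $a>0$ and $s>0$ such that $d_{g^{-1}(0)\cap C}(x)\le a\|g(x)\|_Y$ for all $x\in B_X(x_0,s)\cap C$. Then: (i) if $x_0\in\operatorname{int}(C)$, there exists $y^*\in Y^*$ with $\|y^*\|_{Y^*}\le K_f a$ such that $Df(x_0)+D^*g(x_0)y^*=0$; (ii) if $g$ is locally Lipschitz around $x_0$ with constant $K_g>0$, then $$Df(x_0)h+K_fa\|Dg(x_0)h\|_Y+K_f(1+K_ga)\,d^-_C(x_0;h)\ge 0\quad\forall h\in X;$$ in particular there exists $y^*\in Y^*$ with $\|y^*\|_{Y^*}\le K_fa$ such that $0\in Df(x_0)+D^*g(x_0)y^*+N_C(x_0)$. If in addition $K(C,x_0)$ is convex, then there exists $y^*\in Y^*$ with $\|y^*\|_{Y^*}\le K_fa$ such that $0\in Df(x_0)+D^*g(x_0)y^*+(K(C,x_0))^0$.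
   Context: A local solution $x_0$ is a feasible point ($x_0\in C$, $g(x_0)=0$) such that $f(x_0)\le f(x)$ for all feasible $x$ in some neighbourhood of $x_0$. $B_X(x,r)$ is the closed ball. A map $\varphi$ is Gâteaux differentiable at $x_0$ if there is a bounded linear operator $D\varphi(x_0)$ with $\lim_{\tau\to0^+}(\varphi(x_0+\tau h)-\varphi(x_0))/\tau=D\varphi(x_0)h$ for all $h$; $D^*g(x_0):Y^*\to X^*$ is the adjoint of $Dg(x_0)$. For a nonempty $A\subseteq X$, $d_A(x)=\inf_{a\in A}\|x-a\|_X$. For $x\in A$: the lower Dini derivative is $d^-_A(x;h)=\liminf_{\tau\to0^+}d_A(x+\tau h)/\tau$; the contingent cone is $K(A,x)=\{h\in X: d^-_A(x;h)=0\}$; the Clarke tangent cone is $T_A(x)=\{h\in X:\lim_{y\to x,\,y\in A,\,\tau\to0^+}d_A(y+\tau h)/\tau=0\}$; the Clarke normal cone is $N_A(x)=T_A(x)^0$, where for a cone $\mathcal K$, $\mathcal K^0=\{x^*\in X^*:\langle x^*,h\rangle\le0\ \forall h\in\mathcal K\}$. *)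

(* Defs.v *)
From HB Require Import structures.
From mathcomp Require Import all_boot all_order all_algebra.
From mathcomp Require Import all_classical all_reals all_analysis.
Set Implicit Arguments. Unset Strict Implicit. Unset Printing Implicit Defensive.
Import Order.TTheory GRing.Theory Num.Theory.
Import numFieldNormedType.Exports.
Local Open Scope classical_set_scope.
Local Open Scope ring_scope.

Section Defs.
Variable R : realType.

Definition is_linear (U V : normedModType R) (L : U -> V) : Prop :=
  forall (c : R) (u v : U), L (c *: u + v) = c *: L u + L v.

Definition bounded_linear (U V : normedModType R) (L : U -> V) : Prop :=
  is_linear L /\ continuous L.

Definition bounded_functional (U : normedModType R) (xs : U -> R) : Prop :=
  @bounded_linear U R^o xs.

Definition dual_norm (U : normedModType R) (ys : U -> R) : R :=
  sup [set `|ys y| | y in [set y : U | `|y| <= 1]].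

Definition gateaux (U V : normedModType R) (g : U -> V) (x0 : U) (D : U -> V)
  : Prop :=
  bounded_linear D /\
  forall h : U, (fun t : R => t^-1 *: (g (x0 + t *: h) - g x0)) @ 0^'+ --> D h.

Definition gateaux_e (U : normedModType R) (f : U -> \bar R) (x0 : U)
  (D : U -> R) : Prop :=
  f x0 \is a fin_num /\ bounded_functional D /\
  forall h : U,
    (fun t : R => ((f (x0 + t *: h)%R - f x0) * (t^-1)%:E)%E) @ 0^'+ --> (D h)%:E.

Definition dist_set (U : normedModType R) (A : set U) (x : U) : R :=
  inf [set `|x - a| | a in A].

Definition dini_lower (U : normedModType R) (A : set U) (x h : U) : \bar R :=
  limf_einf (fun t : R => (dist_set A (x + t *: h) / t)%:E) 0^'+.

Definition contingent_cone (U : normedModType R) (A : set U) (x : U) : set U :=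
  [set h | (dini_lower A x h = 0)%E].

Definition clarke_tangent_cone (U : normedModType R) (A : set U) (x : U)
  : set U :=
  [set h | forall e : R, 0 < e -> exists2 d : R, 0 < d &
     forall y : U, A y -> `|y - x| < d -> forall t : R, 0 < t -> t < d ->
       `|dist_set A (y + t *: h) / t| < e].

Definition polar_cone (U : normedModType R) (K : set U) : set (U -> R) :=
  [set xs | bounded_functional xs /\ forall h, K h -> xs h <= 0].

Definition clarke_normal_cone (U : normedModType R) (A : set U) (x : U)
  : set (U -> R) :=
  polar_cone (clarke_tangent_cone A x).

Definition convex_set_of (U : normedModType R) (K : set U) : Prop :=
  forall u v : U, K u -> K v -> forall t : R, 0 <= t <= 1 ->
    K (t *: u + (1 - t) *: v).

End Defs.

(* Main.v *)
Require Import Defs.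
From HB Require Import structures.
From mathcomp Require Import all_boot all_order all_algebra.
From mathcomp Require Import all_classical all_reals all_analysis.
From mathcomp Require Import ring lra.
Set Implicit Arguments. Unset Strict Implicit. Unset Printing Implicit Defensive.
Import Order.TTheory GRing.Theory Num.Theory.
Import numFieldNormedType.Exports.
Local Open Scope classical_set_scope.
Local Open Scope ring_scope.

Section HBsec.
Variable R : realType.

Definition lgraph (V : lmodType R) (S : set (V * R)) (G : set (V * R)) :=
  [/\ (forall c y1 b1 y2 b2, G (y1,b1) -> G (y2,b2) -> G (c*:y1+y2, c*b1+b2)),
      (forall y b1 b2, G (y,b1) -> G (y,b2) -> b1 = b2) &
      (forall y b r, G (y,b) -> S (y,r) -> b <= r)].

Lemma HB_rel (V : lmodType R) (S : set (V * R)) :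
  (forall y1 r1 y2 r2, S (y1,r1) -> S (y2,r2) -> S (y1+y2, r1+r2)) ->
  (forall y r t, 0 < t -> S (y,r) -> S (t*:y, t*r)) ->
  (forall y, exists r, S (y,r)) ->
  (forall r, S (0,r) -> 0 <= r) ->
  exists l : V -> R, (forall c u v, l (c*:u+v) = c * l u + l v) /\
     (forall y r, S (y,r) -> l y <= r).
Proof.
move=> Sadd Sscale Sfull S0.
have [A [PA Amax]] : exists A, lgraph S A /\ forall B, A `<` B -> ~ lgraph S B.
  apply: Zorn_bigcup => F FP Ftot; split.
  - move=> c y1 b1 y2 b2 [G1 FG1 G1y] [G2 FG2 G2y].
    have [G12|G21] := Ftot _ _ FG1 FG2.
    + exists G2; first by [].
      have [h _ _] := FP _ FG2; apply: h; last by [].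
      by apply: G12.
    + exists G1; first by [].
      have [h _ _] := FP _ FG1; apply: h; first by [].
      by apply: G21.
  - move=> y b1 b2 [G1 FG1 G1y] [G2 FG2 G2y].
    have [G12|G21] := Ftot _ _ FG1 FG2.
    + have [_ h _] := FP _ FG2; exact: h _ _ _ (G12 _ G1y) G2y.
    + have [_ h _] := FP _ FG1; exact: h _ _ _ G1y (G21 _ G2y).
  - move=> y b r [G FG Gy] Syr; have [_ _ h] := FP _ FG; exact: h Gy Syr.
have [Alin Afun Adom] := PA.
have A00 : A (0,0).
  have [[[y b] Ayb]|A0] := pselect (A !=set0).
    by have := Alin (-1) y b y b Ayb Ayb; rewrite scaleN1r addNr mulN1r addNr.
  exfalso; apply: (Amax [set (0,0)]).
    split; first by move=> [y b] /= Ayb; exfalso; apply: A0; exists (y,b).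
    by move=> h; apply: A0; exists (0,0); apply: h.
  split.
  - move=> c y1 b1 y2 b2 /= [-> ->] [-> ->]; by rewrite scaler0 mulr0 !addr0.
  - by move=> y b1 b2 /= [_ ->] [_ ->].
  - by move=> y b r /= [-> ->]; exact: S0.
have Atot : forall x, exists b, A (x,b).
  move=> x; apply/not_existsP => Ax.
  pose L := [set z | exists y b r, [/\ A (y,b), S (y - x, r) & z = b - r]].
  pose U := [set z | exists y b r, [/\ A (y,b), S (y + x, r) & z = r - b]].
  have [r0 Sr0] := Sfull (-x); have [r1 Sr1] := Sfull x.
  have LU : forall l u, L l -> U u -> l <= u.
    move=> l u [y [b [r [Ayb Syr El]]]] [z [d [r' [Azd Szr' Eu]]]]; subst l u.
    have := Sadd _ _ _ _ Syr Szr'.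
    rewrite addrACA addNr addr0 => S2.
    have := Adom _ _ _ (Alin 1 _ _ _ _ Ayb Azd); rewrite scale1r mul1r => h.
    have := h _ S2; lra.
  have Lne : L !=set0 by exists (0 - r0); exists 0, 0, r0; split => //; rewrite sub0r.
  have Une : U !=set0 by exists (r1 - 0); exists 0, 0, r1; split => //; rewrite add0r.
  pose c := sup L.
  have Lc : forall l, L l -> l <= c.
    move=> l Ll; apply: ub_le_sup => //; case: Une => u Uu; exists u => l' Ll'.
    exact: LU.
  have cU : forall u, U u -> c <= u.
    move=> u Uu; apply: ge_sup => // l Ll; exact: LU.
  apply: (Amax [set p | exists y b t, A (y,b) /\ p = (y + t *: x, b + t * c)]).
    split.
      by move=> [y b] Ayb; exists y, b, 0; split => //; rewrite scale0r mul0r !addr0.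
    move=> h; apply: (Ax c); apply: h; exists 0, 0, 1; split => //.
    by rewrite scale1r mul1r !add0r.
  split.
  - move=> c' y1 b1 y2 b2 [z1 [d1 [t1 [Azd1 E1]]]] [z2 [d2 [t2 [Azd2 E2]]]].
    case: E1 => -> ->; case: E2 => -> ->.
    exists (c' *: z1 + z2), (c' * d1 + d2), (c' * t1 + t2); split; first exact: Alin.
    congr (_, _).
      by rewrite scalerDr scalerDl scalerA; rewrite addrACA.
    by rewrite mulrDr mulrDl mulrA addrACA.
  - move=> y b1 b2 [z1 [d1 [t1 [Azd1 E1]]]] [z2 [d2 [t2 [Azd2 E2]]]].
    case: E1 => E1 ->; case: E2 => E2 ->.
    have [t12|t12] := eqVneq t1 t2.
      subst t2; move: E2; rewrite E1 => /addIr Ez; subst z2.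
      by rewrite (Afun _ _ _ Azd1 Azd2).
    exfalso; apply: (Ax ((t2 - t1)^-1 * (d1 - d2))).
    have Hd := Alin (-1) _ _ _ _ Azd2 Azd1.
    have H0 := Alin ((t2 - t1)^-1) _ _ _ _ Hd A00.
    rewrite !addr0 scaleN1r mulN1r in H0.
    suff -> : x = (t2 - t1)^-1 *: (- z2 + z1) by rewrite [d1 - d2]addrC.
    have E : - z2 + z1 = (t2 - t1) *: x.
      by apply: (addIr (t1 *: x)); rewrite -addrA -E1 E2 addKr scalerBl subrK.
    by rewrite E scalerA mulVf ?scale1r // subr_eq0 eq_sym.
  - move=> y b r [z [d [t [Azd E]]]]; case: E => -> -> Sr.
    have [t0|t0|t0] := ltgtP t 0; last first.
    + by subst t; move: Sr; rewrite scale0r mul0r !addr0; exact: Adom.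
    +
      have Az' := Alin (t^-1) _ _ _ _ Azd A00; rewrite !addr0 in Az'.
      have Sr' := Sscale _ _ (t^-1) ltac:(by rewrite invr_gt0) Sr.
      rewrite scalerDr scalerA mulVf ?gt_eqF // scale1r in Sr'.
      have := cU _ (ex_intro _ _ (ex_intro _ _ (ex_intro _ _ (And3 Az' Sr' erefl)))).
      rewrite -mulrBr -(ler_pM2l t0) mulrA mulfV ?gt_eqF // mul1r.
      by rewrite mulrC lerBrDl addrC.
    +
      have s0 : 0 < - t by rewrite oppr_gt0.
      have Az' := Alin ((- t)^-1) _ _ _ _ Azd A00; rewrite !addr0 in Az'.
      have Sr' := Sscale _ _ ((- t)^-1) ltac:(by rewrite invr_gt0) Sr.
      have E1 : (- t)^-1 * t = -1 by rewrite invrN mulNr mulVf ?lt_eqF.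
      rewrite scalerDr scalerA E1 scaleN1r in Sr'.
      have := Lc _ (ex_intro _ _ (ex_intro _ _ (ex_intro _ _ (And3 Az' Sr' erefl)))).
      rewrite -mulrBr -(ler_pM2l s0) mulrA mulfV ?gt_eqF // mul1r.
      move=> h; lra.
have [l Hl] := choice Atot.
exists l; split.
  move=> c u v; apply: (Afun (c *: u + v)); first exact: Hl.
  exact: Alin (Hl u) (Hl v).
by move=> y r Syr; exact: Adom (Hl y) Syr.
Qed.

Lemma lip_cont (Y W : normedModType R) (f : Y -> W) (k : R) :
  (forall x y, `|f x - f y| <= k * `|x - y|) -> continuous f.
Proof.
move=> fk x; apply/cvgrPdist_lt => e e0.
have k1 : 0 < `|k| + 1 by rewrite ltr_wpDl.
have := @cvgr_dist_lt _ _ _ (nbhs x) _ id x (@cvg_id _ (nbhs x)) (e / (`|k| + 1)).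
rewrite divr_gt0 // => /(_ _ isT); apply: filterS => y hy.
apply: (le_lt_trans (fk x y)).
apply: (le_lt_trans (y := (`|k| + 1) * `|x - y|)).
  apply: ler_wpM2r => //.
  by apply: (le_trans (real_ler_norm (num_real k))); rewrite lerDl.
by rewrite mulrC -ltr_pdivlMr.
Qed.

Lemma multiplier (X Y : normedModType R) (Df : X -> R) (Dg : X -> Y) (K : R)
  (T : set X) :
  0 <= K ->
  (forall c u v, Df (c *: u + v) = c * Df u + Df v) ->
  (forall c u v, Dg (c *: u + v) = c *: Dg u + Dg v) ->
  convex_set_of T ->
  (forall h, T h -> 0 <= Df h + K * `|Dg h|) ->
  exists ys : Y -> R, [/\ bounded_functional ys, dual_norm ys <= K &
     forall h, T h -> 0 <= Df h + ys (Dg h)].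
Proof.
move=> K0 Dfl Dgl Tc Th.
pose S := [set p : Y * R | exists lam h, [/\ 0 <= lam, lam = 0 \/ T h &
   lam * Df h + K * `|p.1 - lam *: Dg h| <= p.2]].
have [l [ll lS]] : exists l : Y -> R, (forall c u v, l (c*:u+v) = c * l u + l v) /\
     (forall y r, S (y,r) -> l y <= r).
  apply: HB_rel.
  - move=> y1 r1 y2 r2 [l1 [h1 [l10 H1 E1]]] [l2 [h2 [l20 H2 E2]]] /=.
    simpl in E1, E2.
    have [l1z|l1n] := eqVneq l1 0.
      exists l2, h2; split => //=; subst l1.
      rewrite mul0r scale0r subr0 add0r in E1.
      have : `|y1 + y2 - l2 *: Dg h2| <= `|y1| + `|y2 - l2 *: Dg h2|.
        by rewrite -addrA ler_normD.
      move/(ler_wpM2l K0); rewrite mulrDr; lra.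
    have [l2z|l2n] := eqVneq l2 0.
      exists l1, h1; split => //=; subst l2.
      rewrite mul0r scale0r subr0 add0r in E2.
      have : `|y1 + y2 - l1 *: Dg h1| <= `|y1 - l1 *: Dg h1| + `|y2|.
        by rewrite addrAC ler_normD.
      move/(ler_wpM2l K0); rewrite mulrDr; lra.
    have Th1 : T h1 by case: H1 => // /eqP; rewrite (negbTE l1n).
    have Th2 : T h2 by case: H2 => // /eqP; rewrite (negbTE l2n).
    have l1p : 0 < l1 by rewrite lt_neqAle eq_sym l1n.
    have l2p : 0 < l2 by rewrite lt_neqAle eq_sym l2n.
    have lp : 0 < l1 + l2 by rewrite addr_gt0.
    pose mu := l1 / (l1 + l2).
    have m1 : (l1 + l2) * mu = l1 by rewrite /mu mulrC divfK ?gt_eqF.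
    have m2 : (l1 + l2) * (1 - mu) = l2 by rewrite mulrBr m1 mulr1 addrAC subrr add0r.
    exists (l1 + l2), (mu *: h1 + (1 - mu) *: h2); split => /=.
    + exact: ltW.
    + right; apply: Tc => //; apply/andP; split.
        by rewrite /mu divr_ge0 // ltW.
      by rewrite /mu ler_pdivrMr // mul1r lerDl ltW.
    + rewrite Dfl -[(1 - mu) *: h2]addr0 Dfl !Dgl.
      have D0 : Df 0 = 0.
        by have := Dfl 1 0 0; rewrite scale1r addr0 mul1r; lra.
      have G0 : Dg 0 = 0.
        have := Dgl 1 0 0; rewrite scale1r addr0 scale1r.
        by move=> /(congr1 (fun z => z - Dg 0)); rewrite subrr addrK.
      rewrite D0 G0 !addr0 mulrDr (mulrA _ mu) m1 (mulrA _ (1 - mu)) m2 scalerDr (scalerA _ mu) m1 (scalerA _ (1 - mu)) m2.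
      have : `|y1 + y2 - (l1 *: Dg h1 + l2 *: Dg h2)| <=
             `|y1 - l1 *: Dg h1| + `|y2 - l2 *: Dg h2|.
        by rewrite opprD addrACA ler_normD.
      move/(ler_wpM2l K0); rewrite mulrDr; lra.
  - move=> y r t t0 [lam [h [lam0 H E]]]; exists (t * lam), h; split => /=.
    + by rewrite mulr_ge0 // ltW.
    + by case: H => [->|?]; [left; rewrite mulr0|right].
    + simpl in E; rewrite -scalerA -scalerBr normrZ gtr0_norm //.
      by rewrite -mulrA (mulrCA K) -mulrDr ler_pM2l.
  - move=> y; exists (K * `|y|), 0, 0; split => //=; first by left.
    by rewrite mul0r scale0r subr0 add0r.
  - move=> r [lam [h [lam0 H E]]]; simpl in E.
    rewrite sub0r normrN normrZ ger0_norm // in E.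
    case: H => [lz|Th'].
      by subst lam; move: E; rewrite !mul0r mulr0 add0r.
    apply: le_trans E; rewrite mulrCA -mulrDr; apply: mulr_ge0 => //; exact: Th.
have lD : forall u v, l (u + v) = l u + l v.
  by move=> u v; rewrite -[u in LHS]scale1r ll mul1r.
have l0 : l 0 = 0 by have := lD 0 0; rewrite addr0; lra.
have lN : forall y, l (- y) = - l y.
  by move=> y; have := lD y (- y); rewrite subrr l0; lra.
have lb : forall y, `|l y| <= K * `|y|.
  move=> y; rewrite ler_norml; apply/andP; split; last first.
    by apply: lS; exists 0, 0; split => //=; [left|rewrite mul0r scale0r subr0 add0r].
  rewrite lerNl -lN; apply: lS; exists 0, 0; split => //=; first by left.
  by rewrite mul0r scale0r subr0 add0r normrN.
exists (fun y => - l y); split.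
- split.
    by move=> c u v /=; rewrite ll opprD -mulrN.
  apply: (@lip_cont _ _ _ K) => x y.
  by rewrite opprK addrC -lN -lD -opprB lN normrN; apply: lb.
- rewrite /dual_norm; apply: ge_sup.
    by exists `|- l 0|, 0 => //=; rewrite normr0.
  move=> _ [y /= hy <-]; rewrite normrN; apply: (le_trans (lb y)).
  by rewrite -[leRHS]mulr1 ler_wpM2l.
- move=> h Th'; rewrite subr_ge0; apply: lS; exists 1, h; split => //=; first by right.
  by rewrite scale1r subrr normr0 mulr0 addr0 mul1r.
Qed.

Lemma lim_ge0 (u : R -> R) (L : R) : u @ 0^'+ --> L ->
  (\forall t \near 0^'+, 0 <= u t) -> 0 <= L.
Proof.
move=> uL u0; rewrite leNgt; apply/negP => L0.
near (0:R)^'+ => t.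
have h1 : 0 <= u t by near: t.
have h2 : u t < 0 by near: t; exact: cvgr_lt uL _ L0.
lra.
Unshelve. all: by end_near. Qed.

Lemma liminf_core (u w : R -> R) (L k : R) : 0 < k -> u @ 0^'+ --> L ->
  (\forall t \near 0^'+, 0 <= u t + k * w t) ->
  (0 <= L%:E + k%:E * limf_einf (fun t => (w t)%:E) 0^'+)%E.
Proof.
move=> k0 uL uw.
have key : forall eta, 0 < eta ->
    ((- (L + eta) / k)%:E <= limf_einf (fun t => (w t)%:E) 0^'+)%E.
  move=> eta eta0; rewrite limf_einfE.
  pose V := [set t | 0 <= u t + k * w t /\ u t < L + eta].
  have FV : (0:R)^'+ V.
    near=> t; split; first by near: t; exact: uw.
    by near: t; apply: cvgr_lt uL _ _; rewrite ltrDl.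
  apply: (@le_trans _ _ (ereal_inf ((fun t => (w t)%:E) @` V))); last first.
    by apply: ereal_sup_ubound; exists V.
  apply: le_ereal_inf_tmp => _ [t [h1 h2] <-]; rewrite lee_fin ler_pdivrMr //.
  rewrite mulrC; lra.
move: key; case: (limf_einf _ _) => [d| |] key.
- rewrite -EFinM -EFinD lee_fin leNgt; apply/negP => H.
  have := key (- (L + k * d) / 2); rewrite lee_fin ler_pdivrMr // => /(_ ltac:(lra)).
  rewrite mulrC; lra.
- by rewrite gt0_muley ?lte_fin // addey.
- by have := key 1 ltr01.
Unshelve. all: by end_near. Qed.

Section Dist.
Variable U : normedModType R.
Implicit Types (A : set U) (x y z : U).

Lemma dist_lbE A x : has_lbound [set `|x - a| | a in A].
Proof. by exists 0 => _ [a _ <-]. Qed.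

Lemma dist_le A x z : A z -> dist_set A x <= `|x - z|.
Proof. by move=> Az; apply: ge_inf; [exact: dist_lbE | exists z]. Qed.

Lemma dist_ge0 A x : A !=set0 -> 0 <= dist_set A x.
Proof.
move=> [a Aa]; apply: lb_le_inf; first by exists `|x - a|, a.
by move=> _ [b _ <-].
Qed.

Lemma dist_in A x : A x -> dist_set A x = 0.
Proof.
move=> Ax; apply/le_anti/andP; split; last by apply: dist_ge0; exists x.
by have := dist_le x Ax; rewrite subrr normr0.
Qed.

Lemma dist_adh A x eps : A !=set0 -> 0 < eps ->
  exists2 z, A z & `|x - z| < dist_set A x + eps.
Proof.
move=> [a Aa] e0.
have [_ [z Az <-] h] := inf_adherent e0 (conj (ex_intro _ `|x - a| (ex_intro2 _ _ a Aa erefl)) (dist_lbE A x)).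
by exists z.
Qed.

Lemma dist_lip A u v : A !=set0 -> dist_set A u <= `|u - v| + dist_set A v.
Proof.
move=> An; rewrite -lerBlDl; apply: lb_le_inf.
  by case: An => a Aa; exists `|v - a|, a.
move=> _ [a Aa <-]; rewrite lerBlDl; apply: (le_trans (dist_le u Aa)).
by rewrite ler_distD.
Qed.

Lemma clarke_zero A x0 : clarke_tangent_cone A x0 0.
Proof.
move=> e e0; exists 1 => // y Ay _ t t0 _.
by rewrite scaler0 addr0 dist_in // mul0r normr0.
Qed.

Lemma clarke_scale A x0 h lam : clarke_tangent_cone A x0 h -> 0 <= lam ->
  clarke_tangent_cone A x0 (lam *: h).
Proof.
move=> Th; rewrite le_eqVlt => /orP[/eqP <-|l0].
  by rewrite scale0r; exact: clarke_zero.
move=> e e0; have [d d0 Hd] := Th (e / lam) (divr_gt0 e0 l0).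
exists (Num.min d (d / lam)); first by rewrite lt_min d0 divr_gt0.
move=> y Ay hy t t0 ht.
move: hy ht; rewrite !lt_min => /andP[hy _] /andP[_ ht].
have tl0 : 0 < t * lam by rewrite mulr_gt0.
have := Hd y Ay hy (t * lam) tl0; rewrite -ltr_pdivlMr // => /(_ ht).
rewrite scalerA => h1.
have -> : dist_set A (y + (t * lam) *: h) / t =
          (dist_set A (y + (t * lam) *: h) / (t * lam)) * lam.
  by field; rewrite ?gt_eqF // mulf_neq0 // gt_eqF.
by rewrite normrM (gtr0_norm l0) -ltr_pdivlMr.
Qed.

Lemma clarke_add A x0 h1 h2 : A !=set0 -> clarke_tangent_cone A x0 h1 ->
  clarke_tangent_cone A x0 h2 -> clarke_tangent_cone A x0 (h1 + h2).
Proof.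
move=> An T1 T2 e e0.
have e30 : 0 < e / 3 by rewrite divr_gt0.
have [d1 d10 H1] := T1 _ e30; have [d2 d20 H2] := T2 _ e30.
have k0 : 0 < 2 + e + `|h1| by rewrite ltr_wpDr // ltr_wpDr ?ltW.
exists (Num.min d1 (Num.min d2 (d2 / (2 + e + `|h1|)))).
  by rewrite !lt_min d10 d20 divr_gt0.
move=> y Ay hy t t0 ht; move: hy ht; rewrite !lt_min.
move=> /and3P[hy1 _ hy3] /and3P[ht1 ht2 ht3].
have /= := H1 y Ay hy1 t t0 ht1; rewrite ger0_norm ?divr_ge0 ?dist_ge0 ?ltW //.
rewrite ltr_pdivrMr // => hd1.
have te0 : 0 < t * (e / 3) by rewrite mulr_gt0.
have [y' Ay' hy'] := dist_adh (y + t *: h1) An te0.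
have hy'x : `|y' - x0| < d2.
  have E1 : `|y' - x0| <= `|y' - (y + t *: h1)| + `|y - x0| + t * `|h1|.
    apply: (le_trans (ler_distD (y + t *: h1) _ _)); rewrite -[X in _ <= X]addrA lerD2l.
    apply: (le_trans (y := `|y - x0| + `|t *: h1|)); last first.
      by rewrite normrZ gtr0_norm.
    by rewrite addrAC ler_normD.
  apply: (le_lt_trans E1); rewrite distrC.
  set q := d2 / (2 + e + `|h1|).
  have qE : q * (2 + e + `|h1|) = d2 by rewrite /q divfK ?gt_eqF.
  have P1 : t * e <= q * e by rewrite ler_pM2r // ltW.
  have P2 : t * `|h1| <= q * `|h1| by apply: ler_wpM2r => //; apply: ltW.
  have hq : `|y - x0| < q := hy3.
  have q0 : 0 < q by rewrite /q divr_gt0.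
  have qe0 : 0 <= q * e by rewrite mulr_ge0 // ltW.
  have tq : t < q := ht3.
  move: qE; rewrite mulrDr mulrDr; clear -P1 P2 hq q0 qe0 tq hd1 hy'; lra.
have /= := H2 y' Ay' hy'x t t0 ht2; rewrite ger0_norm ?divr_ge0 ?dist_ge0 ?ltW //.
rewrite ltr_pdivrMr // => hd2.
rewrite ger0_norm ?divr_ge0 ?dist_ge0 ?ltW // ltr_pdivrMr //.
apply: (le_lt_trans (dist_lip _ (y' + t *: h2) An)).
rewrite scalerDr addrA opprD addrACA subrr addr0.
lra.
Qed.

Lemma clarke_convex A x0 : A !=set0 -> convex_set_of (clarke_tangent_cone A x0).
Proof.
move=> An u v Tu Tv t /andP[t0 t1]; apply: clarke_add => //.
  exact: clarke_scale.
by apply: clarke_scale; rewrite // subr_ge0.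
Qed.

End Dist.
End HBsec.

Unset Implicit Arguments. Set Strict Implicit.

Lemma near_small (R : realType) (X : normedModType R) (x0 h : X) (rr : R) :
  0 < rr -> \forall t \near (0:R)^'+, 0 < t /\ `|x0 + t *: h - x0| <= rr.
Proof.
move=> rr0; near=> t.
have t0 : 0 < t by near: t; exact: nbhs_right_gt.
have k0 : 0 < `|h| + 1 by rewrite ltr_wpDl.
have ht : t < rr / (`|h| + 1) by near: t; apply: nbhs_right_lt; rewrite divr_gt0.
split => //; rewrite addrAC subrr add0r normrZ gtr0_norm //.
move: ht; rewrite ltr_pdivlMr // mulrDr mulr1 => ht.
have : 0 <= t by exact: ltW.
lra.
Unshelve. all: by end_near. Qed.

Lemma linN (R : realType) (U V : lmodType R) (L : U -> V) :
  (forall c u v, L (c *: u + v) = c *: L u + L v) -> forall u, L (- u) = - L u.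
Proof.
move=> Ll u.
have L0 : L 0 = 0.
  have := Ll 1 0 0; rewrite scale1r addr0 scale1r.
  by move=> /(congr1 (fun z => z - L 0)); rewrite subrr addrK.
by have := Ll (-1) u 0; rewrite addr0 L0 addr0 !scaleN1r.
Qed.

Lemma bf_comp (R : realType) (X Y : normedModType R) (Df : X -> R) (Dg : X -> Y)
  (ys : Y -> R) : bounded_functional Df -> bounded_linear Dg ->
  bounded_functional ys -> bounded_functional (fun h => - (Df h + ys (Dg h))).
Proof.
move=> [Dfl Dfc] [Dgl Dgc] [ysl ysc]; split.
  move=> c u v /=; rewrite Dfl Dgl ysl /=.
  rewrite /GRing.scale /=; ring.
move=> x; apply: cvgN; apply: cvgD; first exact: Dfc.
exact: (continuous_comp (Dgc x) (ysc (Dg x))).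
Qed.

Theorem theorem3p1 (R : realType)
  (X Y : completeNormedModType R) (C : set X)
  (f : X -> \bar R) (g : X -> Y) (x0 : X)
  (Df : X -> R) (Dg : X -> Y) (r Kf a s : R) :
  C !=set0 -> closed C ->
  (* x0 is a local solution of min { f x | g x = 0, x in C } *)
  C x0 -> g x0 = 0 ->
  (exists2 delta : R, 0 < delta &
     forall x : X, C x -> g x = 0 -> `|x - x0| < delta -> (f x0 <= f x)%E) ->
  (* (H_f) *)
  gateaux_e f x0 Df -> 0 < r -> 0 < Kf ->
  (forall x x' : X, `|x - x0| <= r -> `|x' - x0| <= r ->
     (f x <= f x' + (Kf * `|x - x'|)%:E)%E) ->
  (* (H_g) *)
  gateaux g x0 Dg ->
  (* calmness of the constraint system at x0 *)
  0 < a -> 0 < s ->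
  (forall x : X, `|x - x0| <= s -> C x ->
     dist_set (g @^-1` [set 0] `&` C) x <= a * `|g x|) ->
  (* (i) *)
  ((interior C) x0 ->
     exists ys : Y -> R, [/\ bounded_functional ys, dual_norm ys <= Kf * a &
       forall h : X, Df h + ys (Dg h) = 0])
  /\
  (* (ii) *)
  (forall Kg : R, 0 < Kg ->
     (exists2 delta : R, 0 < delta &
        forall x x' : X, `|x - x0| <= delta -> `|x' - x0| <= delta ->
          `|g x - g x'| <= Kg * `|x - x'|) ->
     [/\ (forall h : X,
            (0 <= (Df h + Kf * a * `|Dg h|)%:E
                  + (Kf * (1 + Kg * a))%:E * dini_lower C x0 h)%E),
         (exists ys : Y -> R, [/\ bounded_functional ys, dual_norm ys <= Kf * a &
            clarke_normal_cone C x0 (fun h => - (Df h + ys (Dg h)))]) &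
         (convex_set_of (contingent_cone C x0) ->
          exists ys : Y -> R, [/\ bounded_functional ys, dual_norm ys <= Kf * a &
            polar_cone (contingent_cone C x0) (fun h => - (Df h + ys (Dg h)))])]).
Proof.
move=> Cne Ccl Cx0 gx0 [delta delta0 locmin] [ffin [[Dfl Dfc] Dfd]] r0 Kf0 Flip
  [[Dgl Dgc] Dgd] a0 s0 calm.
pose F := fun x => fine (f x).
have fE : forall x, `|x - x0| <= r -> f x = (F x)%:E.
  move=> x hx.
  have hx0 : `|x0 - x0| <= r by rewrite subrr normr0 ltW.
  have h1 := Flip x x0 hx hx0; have h2 := Flip x0 x hx0 hx.
  by move: h1 h2; rewrite /F -(fineK ffin); case: (f x).
have FLip : forall x x', `|x - x0| <= r -> `|x' - x0| <= r ->
    F x <= F x' + Kf * `|x - x'|.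
  by move=> x x' hx hx'; have := Flip x x' hx hx'; rewrite (fE x) // (fE x') // -EFinD lee_fin.
have Fmin : forall x, C x -> g x = 0 -> `|x - x0| < delta -> `|x - x0| <= r -> F x0 <= F x.
  move=> x Cx gx hd hr; have := locmin x Cx gx hd.
  by rewrite (fE x) // (fE x0) ?lee_fin // subrr normr0 ltW.
have [rho rho0 pen] : exists2 rho, 0 < rho &
    forall x, C x -> `|x - x0| <= rho -> F x0 <= F x + Kf * a * `|g x|.
  pose rho := Num.min s (Num.min (r / 3) (delta / 3)).
  have rho0 : 0 < rho by rewrite !lt_min s0 !divr_gt0.
  exists rho => //.
  have rs : rho <= s by rewrite /rho ge_min lexx.
  have rr : rho <= r / 3 by rewrite /rho !ge_min lexx /= orbT.
  have rd : rho <= delta / 3 by rewrite /rho !ge_min lexx !orbT.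
  move=> x Cx hx; apply/ler_addgt0Pr => e e0.
  pose e' := Num.min (e / Kf) rho.
  have e'0 : 0 < e' by rewrite lt_min rho0 andbT divr_gt0.
  have e'1 : e' <= e / Kf by rewrite ge_min lexx.
  have e'2 : e' <= rho by rewrite ge_min lexx orbT.
  have Ag : (g @^-1` [set 0] `&` C) !=set0 by exists x0; split.
  have [z [gz Cz] hz] := dist_adh x Ag e'0.
  have hd := calm x (le_trans hx rs) Cx.
  have hd0 : dist_set (g @^-1` [set 0] `&` C) x <= `|x - x0|.
    by apply: dist_le.
  have tri := ler_distD x z x0.
  rewrite (distrC z x) in tri.
  have hzr : `|z - x0| <= r by lra.
  have hzd : `|z - x0| < delta by lra.
  have hxr : `|x - x0| <= r by lra.
  have := Fmin z Cz gz hzd hzr; have := FLip z x hzr hxr.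
  have M1 : Kf * `|z - x| <= Kf * (a * `|g x|) + Kf * e'.
    rewrite -mulrDr ler_wpM2l ?ltW // distrC; lra.
  have M2 : e' * Kf <= e by rewrite -ler_pdivlMr.
  lra.
have DF : forall h, (fun t => (F (x0 + t *: h) - F x0) / t) @ 0^'+ --> Df h.
  move=> h; have /fine_cvgP[_ H] := Dfd h.
  apply: cvg_trans H; apply: near_eq_cvg; near=> t.
  have [t0 ht] : 0 < t /\ `|x0 + t *: h - x0| <= r by near: t; exact: near_small.
  by rewrite /= (fE (x0 + t *: h)) // (fE x0) ?subrr ?normr0 ?ltW //.
have DG : forall h, (fun t => `|g (x0 + t *: h)| / t) @ 0^'+ --> `|Dg h|.
  move=> h; have := @cvg_norm R Y R (0:R)^'+ _ _ _ (Dgd h).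
  move=> /(_ (@filter_filter R _ (at_right_proper_filter 0))) H.
  apply: cvg_trans H; apply: near_eq_cvg; near=> t.
  have t0 : 0 < t by near: t; exact: nbhs_right_gt.
  by rewrite /= gx0 subr0 normrZ gtr0_norm ?invr_gt0 // mulrC.
have Qc : forall h, (fun t => (F (x0 + t *: h) - F x0) / t +
    Kf * a * (`|g (x0 + t *: h)| / t)) @ 0^'+ --> Df h + Kf * a * `|Dg h|.
  move=> h; apply: cvgD; first exact: DF.
  exact: cvgMl_tmp (DG h).
have Dfl' : forall c u v, Df (c *: u + v) = c * Df u + Df v by exact: Dfl.
have Dgl' : forall c u v, Dg (c *: u + v) = c *: Dg u + Dg v by exact: Dgl.
split.
  move=> Cint.
  have [e e0 eC] : exists2 e, 0 < e & forall y, `|x0 - y| < e -> C y.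
    by move/nbhs_normP: Cint => [e e0 eC]; exists e => // y hy; apply: eC.
  have ineq : forall h, 0 <= Df h + Kf * a * `|Dg h|.
    move=> h; apply: lim_ge0 (Qc h) _.
    have m0 : 0 < Num.min rho (e / 2) by rewrite lt_min rho0 divr_gt0.
    near=> t.
    have [t0 ht] : 0 < t /\ `|x0 + t *: h - x0| <= Num.min rho (e / 2).
      by near: t; exact: near_small.
    have ht1 : `|x0 + t *: h - x0| <= rho by apply: (le_trans ht); rewrite ge_min lexx.
    have ht2 : `|x0 + t *: h - x0| <= e / 2 by apply: (le_trans ht); rewrite ge_min lexx orbT.
    have Cz : C (x0 + t *: h) by apply: eC; rewrite distrC; lra.
    have := pen _ Cz ht1 => P.
    rewrite mulrA -mulrDl; apply: divr_ge0; [lra | exact: ltW].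
  have [ys [ysb ysn ysT]] := multiplier (T := setT) (K := Kf * a)
     (mulr_ge0 (ltW Kf0) (ltW a0)) Dfl' Dgl' (fun _ _ _ _ _ _ => I) (fun h _ => ineq h).
  exists ys; split => // h.
  have [ysl _] := ysb.
  have h1 := ysT h I; have h2 := ysT (- h) I.
  have e1 : Df (- h) = - Df h by exact: (@linN R X R^o Df Dfl h).
  have e2 : ys (- Dg h) = - ys (Dg h) by exact: (@linN R Y R^o ys ysl (Dg h)).
  rewrite (@linN R X Y Dg Dgl) e1 e2 in h2.
  apply/eqP; rewrite eq_le; apply/andP; split; last by [].
  lra.
move=> Kg Kg0 [dg dg0 gLip].
pose K' := Kf * (1 + Kg * a).
have K'0 : 0 < K' by rewrite mulr_gt0 // ltr_pwDl // mulr_ge0 // ltW.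
have key : forall h, \forall t \near (0:R)^'+,
    0 <= ((F (x0 + t *: h) - F x0) / t + Kf * a * (`|g (x0 + t *: h)| / t) + K' * t)
         + K' * (dist_set C (x0 + t *: h) / t).
  move=> h.
  pose rr := Num.min rho (Num.min r dg) / 3.
  have rr0 : 0 < rr by rewrite divr_gt0 // !lt_min rho0 r0 dg0.
  have rr1 : 3 * rr <= rho by rewrite /rr mulrC divfK // ge_min lexx.
  have rr2 : 3 * rr <= r by rewrite /rr mulrC divfK // !ge_min lexx /= orbT.
  have rr3 : 3 * rr <= dg by rewrite /rr mulrC divfK // !ge_min lexx !orbT.
  near=> t.
  have [t0 ht] : 0 < t /\ `|x0 + t *: h - x0| <= rr by near: t; exact: near_small.
  have t1 : t < 1 by near: t; exact: nbhs_right_lt.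
  have t2 : t < rr by near: t; exact: nbhs_right_lt.
  set z := x0 + t *: h.
  set d := dist_set C z.
  have tt0 : 0 < t * t by rewrite mulr_gt0.
  have [c Cc hc] := dist_adh z Cne tt0.
  have dz : d <= `|z - x0| by exact: dist_le.
  have d0 : 0 <= d by exact: dist_ge0.
  have ttt : t * t <= t by rewrite ger_pMr // ltW.
  have tri := ler_distD z c x0.
  rewrite (distrC c z) in tri.
  have hc1 : `|c - x0| <= rho by lra.
  have hc2 : `|c - x0| <= r by lra.
  have hc3 : `|c - x0| <= dg by lra.
  have hz2 : `|z - x0| <= r by lra.
  have hz3 : `|z - x0| <= dg by lra.
  have P0 := pen c Cc hc1.
  have P1 := FLip c z hc2 hz2.
  have gL := gLip c z hc3 hz3.
  have gT : `|g c| <= `|g c - g z| + `|g z|.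
    by have := ler_distD (g z) (g c) 0; rewrite !subr0.
  have hN : `|c - z| <= d + t * t by rewrite distrC ltW.
  have Q1 : Kf * `|c - z| <= Kf * (d + t * t) by rewrite ler_pM2l.
  have Q2 : Kf * a * `|g c| <= Kf * a * (`|g z| + Kg * `|c - z|).
    by rewrite ler_pM2l ?mulr_gt0 //; lra.
  have Q3 : Kf * a * Kg * `|c - z| <= Kf * a * Kg * (d + t * t).
    by rewrite ler_pM2l ?mulr_gt0.
  have S0 : 0 <= F z - F x0 + Kf * a * `|g z| + K' * (d + t * t).
    rewrite /K'; move: Q2; rewrite mulrDr; lra.
  have -> : (F z - F x0) / t + Kf * a * (`|g z| / t) + K' * t + K' * (d / t) =
            (F z - F x0 + Kf * a * `|g z| + K' * (d + t * t)) / t.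
    by field; rewrite gt_eqF.
  by apply: divr_ge0 => //; exact: ltW.
have uc : forall h, (fun t => (F (x0 + t *: h) - F x0) / t +
    Kf * a * (`|g (x0 + t *: h)| / t) + K' * t) @ 0^'+ --> Df h + Kf * a * `|Dg h|.
  move=> h.
  have H0 : (fun t : R => t) @ (0:R)^'+ --> (0:R).
    by apply: cvg_at_right_filter; exact: cvg_id.
  have Fr : Filter (0:R)^'+ := @filter_filter R _ (at_right_proper_filter 0).
  by have := cvgD (Qc h) (cvgMl_tmp (a:=K') H0); rewrite mulr0 addr0 => /(_ Fr Fr).
have iia : forall h, (0 <= (Df h + Kf * a * `|Dg h|)%:E
                  + (Kf * (1 + Kg * a))%:E * dini_lower C x0 h)%E.
  move=> h; exact: liminf_core K'0 (uc h) (key h).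
have bK : 0 <= Kf * a by rewrite mulr_ge0 // ltW.
split => //.
- have ineqT : forall h, clarke_tangent_cone C x0 h -> 0 <= Df h + Kf * a * `|Dg h|.
    move=> h Th.
    have wc : (fun t => dist_set C (x0 + t *: h) / t) @ 0^'+ --> 0.
      apply/cvgrPdist_lt => e e0; have [d d0 Hd] := Th e e0.
      near=> t.
      have t0 : 0 < t by near: t; exact: nbhs_right_gt.
      have td : t < d by near: t; exact: nbhs_right_lt.
      have := Hd x0 Cx0 ltac:(by rewrite subrr normr0) t t0 td.
      by rewrite sub0r normrN.
    have Fr : Filter (0:R)^'+ := @filter_filter R _ (at_right_proper_filter 0).
    have := cvgD (uc h) (cvgMl_tmp (a:=K') wc); rewrite mulr0 addr0 => /(_ Fr Fr) H.
    exact: lim_ge0 H (key h).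
  have [ys [ysb ysn ysT]] := multiplier (T := clarke_tangent_cone C x0) bK Dfl' Dgl'
    (@clarke_convex R X C x0 Cne) ineqT.
  exists ys; split => //; split.
    by apply: bf_comp.
  by move=> h Th; rewrite oppr_le0; exact: ysT.
- move=> Tc.
  have ineqT : forall h, contingent_cone C x0 h -> 0 <= Df h + Kf * a * `|Dg h|.
    by move=> h Th; have := iia h; rewrite Th mule0 adde0 lee_fin.
  have [ys [ysb ysn ysT]] := multiplier (T := contingent_cone C x0) bK Dfl' Dgl'
    Tc ineqT.
  exists ys; split => //; split.
    by apply: bf_comp.
  by move=> h Th; rewrite oppr_le0; exact: ysT.
Unshelve. all: by end_near. Qed.
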